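(* Let $G\subset\mathrm{Homeo}_+([0,1])$ be a group without linked fixed points. Then the set of pairs of successive fixed points of elements of $G$ is at most countable.
   Context: For a group $G$ of homeomorphisms of $[0,1]$, a pair of successive fixed points of $G$ is a pair $\{a,b\}$, $a<b$, such that $(a,b)$ is a connected component of $[0,1]\setminus \mathrm{Fix}(g)$ for some $g\in G$. Two pairs $\{a,b\}$ and $\{c,d\}$ are linked if $(a,b)\cap\{c,d\}$ or $(c,d)\cap\{a,b\}$ consists of exactly one point. $G$ is without linked fixed points if no two pairs of successive fixed points of $G$ are linked. *)

(* Defs.v *)
From Stdlib Require Import Reals.
Open Scope R_scope.

(* An element of Homeo_+([0,1]), represented by a function R -> R whose
   restriction to [0,1] is a continuous, strictly increasing bijection of [0,1]
   onto itself (values outside [0,1] are irrelevant). *)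
Definition homeo_plus01 (f : R -> R) : Prop :=
  (forall x, 0 <= x <= 1 -> 0 <= f x <= 1) /\
  (forall y, 0 <= y <= 1 -> exists x, 0 <= x <= 1 /\ f x = y) /\
  (forall x y, 0 <= x <= 1 -> 0 <= y <= 1 -> x < y -> f x < f y) /\
  (forall x, 0 <= x <= 1 ->
     continuity_pt (fun t => f (Rmax 0 (Rmin 1 t))) x).

Definition is_subgroup_homeo01 (G : (R -> R) -> Prop) : Prop :=
  (forall f, G f -> homeo_plus01 f) /\
  G (fun x => x) /\
  (forall f g, G f -> G g -> G (fun x => f (g x))) /\
  (forall f, G f -> exists h, G h /\
       forall x, 0 <= x <= 1 -> h (f x) = x /\ f (h x) = x).

(* (a,b) is a connected component of [0,1] \ Fix(g): a < b in [0,1],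
   no fixed point of g strictly between a and b, and a, b fixed
   (i.e. (a,b) is maximal). *)
Definition succ_fixed (g : R -> R) (a b : R) : Prop :=
  0 <= a /\ a < b /\ b <= 1 /\ g a = a /\ g b = b /\
  (forall x, a < x < b -> g x <> x).

Definition succ_fixed_pair (G : (R -> R) -> Prop) (a b : R) : Prop :=
  exists g, G g /\ succ_fixed g a b.

Definition exactly_one_in (a b c d : R) : Prop :=
  ((a < c < b) /\ ~ (a < d < b)) \/ (~ (a < c < b) /\ (a < d < b)).

Definition linked (a b c d : R) : Prop :=
  exactly_one_in a b c d \/ exactly_one_in c d a b.

Definition without_linked_fixed_points (G : (R -> R) -> Prop) : Prop :=
  forall a b c d, succ_fixed_pair G a b -> succ_fixed_pair G c d ->
    ~ linked a b c d.

Definition at_most_countable (S : R * R -> Prop) : Prop :=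
  exists h : R * R -> nat, forall p q, S p -> S q -> h p = h q -> p = q.

(* Main.v *)
Require Import Defs.
From Stdlib Require Import ZArith Reals Lra Cantor Ranalysis5 ClassicalEpsilon.
Open Scope R_scope.

Lemma clamp_id u : 0 <= u <= 1 -> Rmax 0 (Rmin 1 u) = u.
Proof. intros. unfold Rmax, Rmin. destruct (Rle_dec 1 u); destruct (Rle_dec 0 _); lra. Qed.

Lemma cont_at f x0 eps : homeo_plus01 f -> 0 <= x0 <= 1 -> 0 < eps ->
  exists del, 0 < del /\ forall t, 0 <= t <= 1 -> Rabs (t - x0) < del ->
    Rabs (f t - f x0) < eps.
Proof.
  intros [_ [_ [_ Hc]]] Hx Heps. specialize (Hc x0 Hx).
  unfold continuity_pt, continue_in, limit1_in, limit_in in Hc.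
  destruct (Hc eps Heps) as [del [Hd H]]. exists del; split; auto.
  intros t Ht Htd. destruct (Req_dec t x0) as [->|Hne].
  - replace (f x0 - f x0) with 0 by ring. rewrite Rabs_R0; lra.
  - specialize (H t). simpl in H. unfold R_dist in H.
    rewrite !clamp_id in H by auto. apply H. split; auto.
    unfold D_x, no_cond. split; auto.
Qed.

Lemma mono f x y : homeo_plus01 f -> 0 <= x <= 1 -> 0 <= y <= 1 -> x < y -> f x < f y.
Proof. intros [_ [_ [H _]]]; auto. Qed.

Lemma mono_le f x y : homeo_plus01 f -> 0 <= x <= 1 -> 0 <= y <= 1 -> x <= y -> f x <= f y.
Proof. intros Hf ? ? [H| ->]; [left; apply (mono f); auto | right; reflexivity]. Qed.

Lemma range f x : homeo_plus01 f -> 0 <= x <= 1 -> 0 <= f x <= 1.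
Proof. intros [H _]; auto. Qed.

Lemma sign h c d y z : homeo_plus01 h -> succ_fixed h c d ->
  c < y < d -> c < z < d -> h y > y -> h z > z.
Proof.
  intros Hh Hs Hy Hz Hhy.
  destruct Hs as (Hc & Hcd & Hd & _ & _ & Hnf).
  destruct (Rtotal_order (h z) z) as [Hlt|[Heq|Hgt]]; auto.
  - exfalso.
    assert (Hcont : forall a, 0 <= a <= 1 ->
      continuity_pt (fun t => h (Rmax 0 (Rmin 1 t)) - t) a).
    { intros a Ha. destruct Hh as (_&_&_&Hc').
      apply (continuity_pt_minus (fun t => h (Rmax 0 (Rmin 1 t))) id).
      apply Hc'; auto. apply derivable_continuous_pt, derivable_pt_id. }
    destruct (Rtotal_order y z) as [Hyz|[Hyz|Hyz]].
    +
      assert (Hcont2 : forall a, y <= a <= z ->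
        continuity_pt (fun t => t - h (Rmax 0 (Rmin 1 t))) a).
      { intros a Ha. destruct Hh as (_&_&_&Hc').
        apply (continuity_pt_minus id (fun t => h (Rmax 0 (Rmin 1 t)))).
        apply derivable_continuous_pt, derivable_pt_id. apply Hc'; lra. }
      assert (A1 : y - h (Rmax 0 (Rmin 1 y)) < 0) by (rewrite clamp_id by lra; lra).
      assert (A2 : 0 < z - h (Rmax 0 (Rmin 1 z))) by (rewrite clamp_id by lra; lra).
      destruct (IVT_interv _ y z Hcont2 Hyz A1 A2) as [w [Hw Hw0]].
      rewrite clamp_id in Hw0 by lra. apply (Hnf w); lra.
    + subst; lra.
    + assert (Hcont2 : forall a, z <= a <= y ->
        continuity_pt (fun t => h (Rmax 0 (Rmin 1 t)) - t) a).
      { intros a Ha. apply Hcont; lra. }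
      assert (A1 : h (Rmax 0 (Rmin 1 z)) - z < 0) by (rewrite clamp_id by lra; lra).
      assert (A2 : 0 < h (Rmax 0 (Rmin 1 y)) - y) by (rewrite clamp_id by lra; lra).
      destruct (IVT_interv _ z y Hcont2 Hyz A1 A2) as [w [Hw Hw0]].
      rewrite clamp_id in Hw0 by lra. apply (Hnf w); lra.
  - exfalso. apply (Hnf z); lra.
Qed.

Lemma conj_pair G h g a b : is_subgroup_homeo01 G -> G h -> G g ->
  succ_fixed g a b -> succ_fixed_pair G (h a) (h b).
Proof.
  intros HG Hh Hg Hs. destruct HG as (Hhom & _ & Hcomp & Hinv).
  destruct (Hinv h Hh) as [hi [Hhi Hhi']].
  pose proof (Hhom h Hh) as Hh0. pose proof (Hhom g Hg) as Hg0.
  pose proof (Hhom hi Hhi) as Hhi0.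
  destruct Hs as (Ha & Hab & Hb & Hga & Hgb & Hnf).
  exists (fun y => h (g (hi y))). split.
  { apply Hcomp; [assumption|]. apply (Hcomp g hi); assumption. }
  assert (Ha1 : 0 <= a <= 1) by lra. assert (Hb1 : 0 <= b <= 1) by lra.
  pose proof (range h a Hh0 Ha1). pose proof (range h b Hh0 Hb1).
  pose proof (mono h a b Hh0 Ha1 Hb1 Hab).
  unfold succ_fixed. repeat split; try lra.
  - destruct (Hhi' a Ha1) as [-> _]. rewrite Hga. reflexivity.
  - destruct (Hhi' b Hb1) as [-> _]. rewrite Hgb. reflexivity.
  - intros y Hy Heq.
    assert (Hy1 : 0 <= y <= 1) by lra.
    pose proof (range hi y Hhi0 Hy1) as Hz1.
    destruct (Hhi' y Hy1) as [_ Hhy].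
    assert (c1 : a < hi y).
    { destruct (Rle_lt_dec (hi y) a) as [Hl|Hl]; auto.
      pose proof (mono_le h (hi y) a Hh0 Hz1 Ha1 Hl). lra. }
    assert (c2 : hi y < b).
    { destruct (Rle_lt_dec b (hi y)) as [Hl|Hl]; auto.
      pose proof (mono_le h b (hi y) Hh0 Hb1 Hz1 Hl). lra. }
    apply (Hnf (hi y)); [lra|].
    pose proof (range g (hi y) Hg0 Hz1) as Hgz.
    destruct (Rtotal_order (g (hi y)) (hi y)) as [Hl|[Hl|Hl]]; auto.
    + pose proof (mono h _ _ Hh0 Hgz Hz1 Hl). lra.
    + pose proof (mono h _ _ Hh0 Hz1 Hgz Hl). lra.
Qed.

Definition Good (G : (R -> R) -> Prop) c d q x : Prop :=
  exists h, G h /\ succ_fixed h c d /\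
   ((c < q < x /\ x < d /\ h q <= x /\ forall t, c < t < d -> h t > t) \/
    (c < x < q /\ q < d /\ x <= h q /\ forall t, c < t < d -> h t < t)).

Lemma inner G c d c' d' q x : is_subgroup_homeo01 G -> without_linked_fixed_points G ->
  Good G c d q x -> Good G c' d' q x -> c < c' -> False.
Proof.
  intros HG HW [h [Hh [Hs Hc]]] [h' [Hh' [Hs' Hc']]] Hcc.
  pose proof (proj1 HG h Hh) as Hh0.
  assert (P : succ_fixed_pair G c d) by (exists h; auto).
  assert (P' : succ_fixed_pair G c' d') by (exists h'; auto).
  destruct Hs as (Hc0 & Hcd & Hd1 & Hhc & Hhd & Hnf).
  pose proof Hs' as (Hc0' & Hcd' & Hd1' & _ & _ & _).
  assert (Hdd : d' < d).
  { destruct (Rlt_le_dec d' d) as [H|H]; auto. exfalso.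
    apply (HW c d c' d' P P'). left. left. split; [|intros [_ ?]; lra].
    destruct Hc as [Hc|Hc]; destruct Hc'; lra. }
  assert (Hc1 : 0 <= c' <= 1) by lra. assert (Hd1'' : 0 <= d' <= 1) by lra.
  pose proof (conj_pair G h h' c' d' HG Hh Hh' Hs') as PC.
  destruct Hc as [(Hq & Hx & Hhq & Hup)|(Hq & Hx & Hhq & Hdn)].
  - assert (Hcq : c' < q) by (destruct Hc'; lra).
    assert (Hq1 : 0 <= q <= 1) by lra.
    pose proof (mono h c' q Hh0 Hc1 Hq1 Hcq).
    pose proof (Hup c' ltac:(lra)). pose proof (Hup d' ltac:(lra)).
    apply (HW c' d' (h c') (h d') P' PC). left. left.
    split; [lra| intros [_ ?]; lra].
  - assert (Hcq : q < d') by (destruct Hc'; lra).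
    assert (Hq1 : 0 <= q <= 1) by lra.
    pose proof (mono h q d' Hh0 Hq1 Hd1'' Hcq).
    pose proof (Hdn c' ltac:(lra)). pose proof (Hdn d' ltac:(lra)).
    apply (HW c' d' (h c') (h d') P' PC). right. left.
    split; [lra| intros [_ ?]; lra].
Qed.

Lemma good_unique G c d c' d' q x : is_subgroup_homeo01 G -> without_linked_fixed_points G ->
  Good G c d q x -> Good G c' d' q x -> c = c' /\ d = d'.
Proof.
  intros HG HW H1 H2.
  destruct (Rtotal_order c c') as [Hl|[He|Hl]].
  - exfalso; apply (inner G c d c' d' q x); auto.
  - subst c'. split; auto.
    destruct H1 as [h [Hh [Hs Hc]]], H2 as [h' [Hh' [Hs' Hc']]].
    assert (P : succ_fixed_pair G c d) by (exists h; auto).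
    assert (P' : succ_fixed_pair G c d') by (exists h'; auto).
    destruct (Rtotal_order d d') as [Hl|[He|Hl]]; auto; exfalso.
    + apply (HW c d c d' P P'). right. right. split; [intros [? _]; lra|].
      destruct Hc as [Hc|Hc]; destruct Hc'; lra.
    + apply (HW c d c d' P P'). left. right. split; [intros [? _]; lra|].
      destruct Hc as [Hc|Hc]; destruct Hc'; lra.
  - exfalso; apply (inner G c' d' c d q x); auto.
Qed.

Definition rat (p : nat * nat) : R := INR (fst p) / INR (snd p).

Lemma density a b : 0 <= a < b -> exists p, a < rat p < b.
Proof.
  intros Hab.
  destruct (archimed_cor1 (b - a) ltac:(lra)) as [N [HN HN0]].
  assert (HNp : 0 < INR N) by (apply lt_0_INR; auto).
  destruct (archimed (a * INR N)) as [H1 H2].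
  assert (Hz : (0 <= up (a * INR N))%Z).
  { apply le_IZR. pose proof (Rmult_le_pos a (INR N) ltac:(lra) ltac:(lra)). simpl; lra. }
  exists (Z.to_nat (up (a * INR N)), N). unfold rat; simpl.
  rewrite INR_IZR_INZ, Z2Nat.id by auto.
  set (z := IZR (up (a * INR N))) in *.
  split.
  - apply (Rmult_lt_reg_r (INR N)); auto. field_simplify; lra.
  - apply (Rmult_lt_reg_r (INR N)); auto. field_simplify; [|lra].
    assert (/ INR N * INR N < (b - a) * INR N)
      by (apply Rmult_lt_compat_r; auto).
    rewrite Rinv_l in H by lra. lra.
Qed.

Lemma good_exists G c d : is_subgroup_homeo01 G -> succ_fixed_pair G c d ->
  exists pq px, Good G c d (rat pq) (rat px).
Proof.
  intros HG [h [Hh Hs]].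
  pose proof (proj1 HG h Hh) as Hh0.
  pose proof Hs as (Hc0 & Hcd & Hd1 & Hhc & Hhd & Hnf).
  destruct (density c d ltac:(lra)) as [px Hx].
  set (x := rat px) in *.
  destruct (Rtotal_order (h x) x) as [Hl|[He|Hg]].
  -
    destruct (cont_at h d (d - x) Hh0 ltac:(lra) ltac:(lra)) as [del [Hdel Hct]].
    destruct (density (Rmax (d - del) x) d) as [pq Hq].
    { split. pose proof (Rmax_r (d-del) x); lra. apply Rmax_lub_lt; lra. }
    pose proof (Rmax_l (d-del) x). pose proof (Rmax_r (d-del) x).
    exists pq, px. exists h. split; auto. split; auto. right.
    set (q := rat pq) in *. fold x.
    split; [lra|]. split; [lra|]. split.
    + assert (Habs : Rabs (q - d) < del) by (rewrite Rabs_left by lra; lra).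
      specialize (Hct q ltac:(lra) Habs). rewrite Hhd in Hct.
      apply Rabs_def2 in Hct. lra.
    + intros t Ht. assert (h t <> t) by (apply Hnf; lra).
      destruct (Rtotal_order (h t) t) as [?|[?|?]]; auto; [contradiction|].
      pose proof (sign h c d t x Hh0 Hs Ht ltac:(lra) ltac:(lra)). lra.
  - exfalso; apply (Hnf x); lra.
  - destruct (cont_at h c (x - c) Hh0 ltac:(lra) ltac:(lra)) as [del [Hdel Hct]].
    destruct (density c (Rmin (c + del) x)) as [pq Hq].
    { split. lra. apply Rmin_glb_lt; lra. }
    pose proof (Rmin_l (c+del) x). pose proof (Rmin_r (c+del) x).
    exists pq, px. exists h. split; auto. split; auto. left.
    set (q := rat pq) in *. fold x.
    split; [lra|]. split; [lra|]. split.
    + assert (Habs : Rabs (q - c) < del) by (rewrite Rabs_right by lra; lra).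
      specialize (Hct q ltac:(lra) Habs). rewrite Hhc in Hct.
      apply Rabs_def2 in Hct. lra.
    + intros t Ht. apply (sign h c d x t Hh0 Hs); lra.
Qed.

Theorem propositionp (G : (R -> R) -> Prop) :
  is_subgroup_homeo01 G ->
  without_linked_fixed_points G ->
  at_most_countable (fun p => succ_fixed_pair G (fst p) (snd p)).
Proof.
  intros HG HW.
  set (CP := fun (p : R * R) (n : nat) => exists pq px,
        n = to_nat (to_nat pq, to_nat px) /\ Good G (fst p) (snd p) (rat pq) (rat px)).
  assert (Hex : forall p, exists n, succ_fixed_pair G (fst p) (snd p) -> CP p n).
  { intros p. destruct (classic (succ_fixed_pair G (fst p) (snd p))) as [H|H].
    - destruct (good_exists G _ _ HG H) as [pq [px Hg]].
      exists (to_nat (to_nat pq, to_nat px)). intros _. exists pq, px; auto.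
    - exists 0%nat. intros; contradiction. }
  exists (fun p => epsilon (inhabits 0%nat)
            (fun n => succ_fixed_pair G (fst p) (snd p) -> CP p n)).
  intros p p' Hp Hp' Heq.
  pose proof (epsilon_spec (inhabits 0%nat) _ (Hex p) Hp) as C1.
  pose proof (epsilon_spec (inhabits 0%nat) _ (Hex p') Hp') as C2.
  rewrite Heq in C1.
  destruct C1 as [pq [px [E1 G1]]]. destruct C2 as [pq' [px' [E2 G2]]].
  rewrite E1 in E2.
  apply (f_equal of_nat) in E2. rewrite !cancel_of_to in E2.
  injection E2 as E3 E4.
  apply (f_equal of_nat) in E3. apply (f_equal of_nat) in E4.
  rewrite !cancel_of_to in E3, E4. subst pq' px'.
  destruct (good_unique G _ _ _ _ _ _ HG HW G1 G2) as [Ea Eb].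
  destruct p, p'; simpl in *; subst; reflexivity.
Qed.
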